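(* Let $X$ be a finite discrete space with at least two elements, $\Gamma$ a nonempty countable set, $\varphi:\Gamma\to\Gamma$ a map. If $(X^\Gamma,\sigma_\varphi)$ is dense distributional chaotic, then $\varphi$ has no periodic point.
   Context: $X^\Gamma$ has the product topology and a fixed compatible metric $d$; $\sigma_\varphi((x_\alpha)_{\alpha\in\Gamma})=(x_{\varphi(\alpha)})_{\alpha\in\Gamma}$. With $f=\sigma_\varphi$, $\xi(x,y,t,n)=\#\{i\in\{0,\dots,n-1\}:d(f^i(x),f^i(y))<t\}$, $F_{xy}(t)=\liminf_n\xi(x,y,t,n)/n$, $F^*_{xy}(t)=\limsup_n\xi(x,y,t,n)/n$. The system is dense distributional chaotic if there exist a dense uncountable set $A\subseteq X^\Gamma$ and $\varepsilon>0$ such that for all distinct $x,y\in A$: $F^*_{xy}(s)=1$ for every $s>0$ and $F_{xy}(\varepsilon)=0$. *)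

(* Defs.v *)
From HB Require Import structures.
From mathcomp Require Import all_boot all_order all_algebra.
From mathcomp Require Import all_classical all_reals all_analysis.
Set Implicit Arguments. Unset Strict Implicit. Unset Printing Implicit Defensive.
Import Order.TTheory GRing.Theory Num.Theory.
Local Open Scope classical_set_scope.
Local Open Scope ring_scope.

Definition shift_space (Gamma : Type) (X : choiceType) : topologicalType :=
  {ptws Gamma -> discrete_topology X}.

Definition sigma_phi (Gamma : Type) (X : choiceType) (phi : Gamma -> Gamma)
  (x : shift_space Gamma X) : shift_space Gamma X := fun a => x (phi a).

Definition is_metric (R : realType) (T : Type) (d : T -> T -> R) : Prop :=
  [/\ forall x y, 0 <= d x y,
      forall x y, d x y = 0 <-> x = y,
      forall x y, d x y = d y x &
      forall x y z, d x z <= d x y + d y z].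

Definition compatible_metric (R : realType) (T : topologicalType)
  (d : T -> T -> R) : Prop :=
  is_metric d /\
  forall A : set T, open A <->
    (forall x, A x -> exists2 e : R, 0 < e & [set y | d x y < e] `<=` A).

Definition xi (R : realType) (T : Type) (d : T -> T -> R) (f : T -> T)
  (x y : T) (t : R) (n : nat) : nat :=
  #|[set i : 'I_n | `[< d (iter i f x) (iter i f y) < t >] ]|.

Definition F_low (R : realType) (T : Type) (d : T -> T -> R) (f : T -> T)
  (x y : T) (t : R) : R :=
  limn_inf (fun n => (xi d f x y t n)%:R / n%:R).
Definition F_up (R : realType) (T : Type) (d : T -> T -> R) (f : T -> T)
  (x y : T) (t : R) : R :=
  limn_sup (fun n => (xi d f x y t n)%:R / n%:R).

Definition dense_distributional_chaotic (R : realType) (T : topologicalType)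
  (d : T -> T -> R) (f : T -> T) : Prop :=
  exists (A : set T) (eps : R),
    [/\ dense A, ~ countable A, 0 < eps &
      forall x y, A x -> A y -> x <> y ->
        (forall s : R, 0 < s -> F_up d f x y s = 1) /\ F_low d f x y eps = 0].

Definition has_periodic_point (Gamma : Type) (phi : Gamma -> Gamma) : Prop :=
  exists (g : Gamma) (n : nat), (0 < n)%N /\ iter n phi g = g.

(* Main.v *)
Require Import Defs.
From HB Require Import structures.
From mathcomp Require Import all_boot all_order all_algebra.
From mathcomp Require Import all_classical all_reals all_analysis.
From mathcomp Require Import lra.
Import Order.TTheory GRing.Theory Num.Theory.
Local Open Scope classical_set_scope.
Local Open Scope ring_scope.
Lemma lsup0 (R : realType) : limn_sup (fun _ : nat => (0:R)) = 0.
Proof. rewrite cvg_limn_supE; last exact: is_cvg_cst. exact: lim_cst. Qed.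
Lemma cpt (Gamma : countType) (X : finType) : compact [set: shift_space Gamma X].
Proof.
have K : forall s : Gamma, compact (setT : set (discrete_topology X)).
  move=> _; apply: finite_compact; exact: (@finite_finset X setT).
have := @tychonoff Gamma (fun _ => discrete_topology X) (fun _ => setT) K.
set A := (X in compact X -> _).
suff -> : A = setT by [].
by rewrite eqEsubset.
Qed.
Lemma opn (Gamma : countType) (X : finType) (g : Gamma) (c : X) :
  open [set v : shift_space Gamma X | v g = c].
Proof.
have Hc : continuous (fun v : shift_space Gamma X => (v g : discrete_topology X)).
  exact: (@proj_continuous Gamma (fun _ => discrete_topology X) g).
exact: (proj1 (continuousP _) Hc [set c] (discrete_open _)).
Qed.
Lemma minseq (R : realType) (T : eqType) (l : seq T) (e : T -> R) :
  (forall i, 0 < e i) -> exists2 s : R, 0 < s & forall i, i \in l -> s <= e i.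
Proof.
move=> ep; elim: l => [|a l [s sp IH]]; first by exists 1.
exists (Order.min (e a) s); first by rewrite lt_min ep sp.
move=> i; rewrite in_cons => /orP [/eqP ->|il]; first by rewrite ge_min lexx.
by rewrite ge_min IH ?orbT.
Qed.

Lemma lebesgue (R : realType) (T : topologicalType) (d : T -> T -> R)
  (P : T -> T -> Prop) :
  compatible_metric d -> compact [set: T] ->
  (forall u, open [set v | P u v]) -> (forall u, P u u) ->
  (forall u v w, P w u -> P w v -> P u v) ->
  exists2 s : R, 0 < s & forall u v, d u v < s -> P u v.
Proof.
move=> [[d0 dE dC dT] Hop] cT Po Pr Pt.
have ballo : forall u (r : R), open [set v | d u v < r].
  move=> u r; apply/Hop => v /= duv.
  exists (r - d u v); first by rewrite subr_gt0.
  move=> w /= dvw; have := dT u v w; lra.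
have := proj1 (compact_near_coveringP _) cT nat \oo
  (fun m u => forall v, d u v < m.+1%:R^-1 -> P u v) _.
case.
- move=> x _.
  have [e e0 He] := proj1 (Hop [set v | P x v]) (Po x) x (Pr x).
  have e20 : 0 < e / 2 by lra.
  exists ([set x' | d x x' < e / 2], [set m : nat | m.+1%:R^-1 < e / 2]) => /=.
    split; first apply: open_nbhs_nbhs; first split.
    + exact: ballo.
    + by rewrite /= (proj2 (dE x x) erefl).
    + exact: (near_infty_natSinv_lt (PosNum e20)).
  case=> x' m /= [dxx' me] v dx'v.
  apply: (Pt x' v x); apply: He => /=; first lra.
  have H := dT x x' v; have H2 := lt_trans dx'v me; lra.
- move=> N _ HN.
  exists N.+1%:R^-1; first by rewrite invr_gt0 ltr0n.
  by move=> u v; apply: (HN N (leqnn N) u I).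
Qed.

Lemma iter_sigma (Gamma : Type) (X : choiceType) (phi : Gamma -> Gamma)
  (x : shift_space Gamma X) i :
  iter i (sigma_phi phi) x = (fun c => x (iter i phi c)) :> (Gamma -> X).
Proof.
elim: i => [|i IH] /=; first by [].
rewrite IH; apply: funext => c /=; by rewrite /sigma_phi -iterSr.
Qed.

Lemma iter_per (Gamma : Type) (phi : Gamma -> Gamma) g n :
  iter n phi g = g -> forall k, iter (k * n) phi g = g.
Proof.
move=> Hg; elim=> [|k IH] //=.
by rewrite mulSn iterD IH Hg.
Qed.

Lemma opnP (Gamma : countType) (X : finType) (h : nat -> Gamma)
  (u : shift_space Gamma X) m :
  open [set v : shift_space Gamma X | forall j, (j < m)%N -> u (h j) = v (h j)].
Proof.
elim: m => [|m IH].
  suff -> : [set v : shift_space Gamma X | forall j, (j < 0)%N -> u (h j) = v (h j)] = setT by exact: openT.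
  by apply/seteqP; split => // v _ j.
suff -> : [set v : shift_space Gamma X | forall j, (j < m.+1)%N -> u (h j) = v (h j)] =
  [set v : shift_space Gamma X | forall j, (j < m)%N -> u (h j) = v (h j)] `&`
  [set v : shift_space Gamma X | v (h m) = u (h m)].
  by apply: openI => //; exact: opn.
apply/seteqP; split => v /=.
  by move=> H; split; [move=> j jm; apply: H; exact: ltnW|rewrite H].
move=> [H1 H2] j; rewrite ltnS leq_eqVlt => /orP [/eqP ->|]; first by [].
exact: H1.
Qed.

Theorem lemma4p1 (R : realType) (X : finType) (Gamma : countType)
  (phi : Gamma -> Gamma)
  (d : shift_space Gamma X -> shift_space Gamma X -> R) :
  (1 < #|X|)%N ->
  (exists g : Gamma, True) ->
  compatible_metric d ->
  dense_distributional_chaotic d (sigma_phi phi) ->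
  ~ has_periodic_point phi.
Proof.
move=> HX _ Hd [A [eps [Ad Anc eps0 HA]]] [g [n [n0 Hg]]].
have [a [b [_ _ ab]]] := card_gt1P HX.
pose h j := iter j phi g.
have [s s0 Hs] := @lebesgue R (shift_space Gamma X) d
  (fun u v => forall j, (j < n.+1)%N -> u (h j) = v (h j)) Hd (cpt Gamma X)
  (fun u => @opnP Gamma X h u n.+1) (fun u j _ => erefl)
  (fun u v w H1 H2 j jn => etrans (esym (H1 j jn)) (H2 j jn)).
have [x [xa Ax]] : exists x, [set v : shift_space Gamma X | v g = a] x /\ A x.
  apply: Ad; [by exists (fun _ => a) | exact: opn].
have [y [yb Ay]] : exists x, [set v : shift_space Gamma X | v g = b] x /\ A x.
  apply: Ad; [by exists (fun _ => b) | exact: opn].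
have xy : x <> y by move=> E; move: ab; rewrite -xa -yb E eqxx.
have [Fu _] := HA x y Ax Ay xy.
have := Fu s s0; rewrite /F_up.
have xi0 : forall N, xi d (sigma_phi phi) x y s N = 0%N.
  move=> N; apply: eq_card0 => i; apply/negP; rewrite in_setE /= => /asboolP H.
  have := Hs _ _ H (n - i %% n)%N _.
  rewrite !iter_sigma /h -!iterD.
  have -> : (i + (n - i %% n) = (i %/ n).+1 * n)%N.
    rewrite {1}(divn_eq i n) -addnA subnKC; first by rewrite mulSn addnC.
    by apply: ltnW; rewrite ltn_mod.
  rewrite !(@iter_per _ _ _ _ Hg) xa yb => /(_ _) E.
  by move: ab; rewrite E ?eqxx // ltnS leq_subr.
under eq_fun do rewrite xi0 mul0r.
by rewrite lsup0 => /esym/eqP; rewrite oner_eq0.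
Qed.
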